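(* Let $X$ and $Y$ be bi-atomic random variables. Then $(X,Y)\in\mathrm{IC}$ if and only if either (i) $X$ and $Y$ have the same support, or (ii) $X$ and $Y$ are independent.
   Context: The support of $X$ is $\{x:\mathbb P(x-\epsilon<X\le x+\epsilon)>0\ \forall\epsilon>0\}$; bi-atomic means the support has exactly two points. $\mathcal L^2$ is the set of non-degenerate real random variables with finite variance. $(X,Y)\in\mathrm{IC}_r$ means $\mathrm{Corr}(X,Y)=\mathrm{Corr}(g(X),g(Y))=r$ for all measurable $g$ with $g(X),g(Y)\in\mathcal L^2$, and $\mathrm{IC}=\bigcup_{r\in[-1,1]}\mathrm{IC}_r$. *)

(* Defs.v *)
From HB Require Import structures.
From mathcomp Require Import all_boot all_order all_algebra.
From mathcomp Require Import all_classical all_reals all_analysis.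
Set Implicit Arguments. Unset Strict Implicit. Unset Printing Implicit Defensive.
Import Order.TTheory GRing.Theory Num.Theory.
Local Open Scope classical_set_scope.
Local Open Scope ring_scope.

Section defs.
Context {d : measure_display} {T : measurableType d} {R : realType}
  (P : probability T R).

Definition rv_support (X : T -> R) : set R :=
  [set x | forall e : R, 0 < e -> (0 < P [set w | (x - e < X w <= x + e)%R])%E].

Definition biatomic (X : T -> R) : Prop :=
  exists a b : R, a != b /\ rv_support X = [set a; b].

(* L^2: non-degenerate (not a.s. constant) real r.v. with finite variance *)
Definition inL2 (X : T -> R) : Prop :=
  X \in Lfun P 2%:E /\ (forall c : R, P [set w | X w = c] <> 1%E).

Definition corr (X Y : T -> R) : R :=
  fine (covariance P X Y) / Num.sqrt (fine ('V_P[X]) * fine ('V_P[Y])).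

Definition IC_r (r : R) (X Y : T -> R) : Prop :=
  inL2 X /\ inL2 Y /\ corr X Y = r /\
  forall g : R -> R, measurable_fun setT g ->
    inL2 (g \o X) -> inL2 (g \o Y) -> corr (g \o X) (g \o Y) = r.

Definition IC (X Y : T -> R) : Prop :=
  exists r : R, -1 <= r <= 1 /\ IC_r r X Y.

Definition rv_independent (X Y : T -> R) : Prop :=
  forall A B : set R, measurable A -> measurable B ->
    P (X @^-1` A `&` Y @^-1` B) = (P (X @^-1` A) * P (Y @^-1` B))%E.
End defs.

(* Main.v *)
Require Import Defs.
From HB Require Import structures.
From mathcomp Require Import all_boot all_order all_algebra.
From mathcomp Require Import all_classical all_reals all_analysis.
From mathcomp Require Import measurable_realfun lra ring.
Set Implicit Arguments. Unset Strict Implicit. Unset Printing Implicit Defensive.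
Import Order.TTheory GRing.Theory Num.Theory.
Local Open Scope classical_set_scope.
Local Open Scope ring_scope.

Section S.
Context {d : measure_display} {T : measurableType d} {R : realType} (P : probability T R).

Lemma ae_le_measure (S S' : set T) : measurable S -> measurable S' ->
  {ae P, forall w, S w -> S' w} -> (P S <= P S')%E.
Proof.
move=> mS mS' [N [mN N0 HN]].
have sub : S `<=` S' `|` N.
  move=> w Sw; have [S'w|nS'w] := pselect (S' w); [by left|right].
  by apply: HN => /= /(_ Sw).
apply: (le_trans (le_measure _ _ _ sub)); rewrite ?inE; [exact: mS|exact: measurableU|].
apply: (le_trans (measureU2 _ mS' mN)).
have N0' : P N = 0%E := N0.
by rewrite [X in (_ + X)%E](_ : _ = 0%E) ?adde0 //; exact: N0.
Qed.

Lemma ae_prob1 (S : set T) : measurable S -> {ae P, forall w, S w} -> P S = 1%E.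
Proof.
move=> mS h; apply/eqP; rewrite eq_le probability_le1 //=.
rewrite -(probability_setT P); apply: ae_le_measure => //.
by apply: filterS h.
Qed.

Lemma expectation_ae (f g : T -> R) : measurable_fun setT f -> measurable_fun setT g ->
  {ae P, forall w, f w = g w} -> ('E_P[f] = 'E_P[g])%E.
Proof.
move=> mf mg h; rewrite expectation.unlock.
apply: ae_eq_integral => //.
- exact/measurable_EFinP.
- exact/measurable_EFinP.
- by rewrite /ae_eq; apply: filterS h => w -> _.
Qed.

Lemma covariance_ae (f f' g g' : T -> R) :
  measurable_fun setT f -> measurable_fun setT f' ->
  measurable_fun setT g -> measurable_fun setT g' ->
  {ae P, forall w, f w = f' w} -> {ae P, forall w, g w = g' w} ->
  covariance P f g = covariance P f' g'.
Proof.
move=> mf mf' mg mg' hf hg.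
rewrite !covariance.unlock (expectation_ae mf mf' hf) (expectation_ae mg mg' hg).
apply: expectation_ae.
- by apply: measurable_funM; apply: measurable_funB.
- by apply: measurable_funM; apply: measurable_funB.
- by apply: filterS2 hf hg => w hfw hgw; rewrite !mulrfctE /= hfw hgw.
Qed.

Lemma Lfun_ae (f g : T -> R) : measurable_fun setT f ->
  {ae P, forall w, f w = g w} -> g \in Lfun P 2%:E -> f \in Lfun P 2%:E.
Proof.
move=> mf h /andP[mg]; rewrite !inE /= /finite_norm => fin.
move: mg; rewrite inE/= => mg.
apply/andP; split; first by rewrite inE.
rewrite inE /= /finite_norm.
suff -> : Lnorm P 2%:E (EFin \o f) = Lnorm P 2%:E (EFin \o g) by [].
rewrite unlock /=; congr (_ `^ _)%E.
apply: ae_eq_integral => //.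
- apply/measurable_EFinP; apply: (@measurableT_comp _ _ _ _ _ _ (@powR R ^~ 2)) => //.
  exact: measurableT_comp.
- apply/measurable_EFinP; apply: (@measurableT_comp _ _ _ _ _ _ (@powR R ^~ 2)) => //.
  exact: measurableT_comp.
- by rewrite /ae_eq; apply: filterS h => w /= -> _.
Qed.


Lemma L21 (f : T -> R) : f \in Lfun P 2%:E -> f \in Lfun P 1.
Proof. by apply: Lfun_subset12; apply: fin_num_measure. Qed.

Lemma L2mul (f g : T -> R) : f \in Lfun P 2%:E -> g \in Lfun P 2%:E -> (f * g)%R \in Lfun P 1.
Proof. exact: Lfun2_mul_Lfun1. Qed.

Lemma indic_pow2 (A : set T) (x : T) : `|(\1_A x : R)| `^ 2 = \1_A x.
Proof.
rewrite /indic; case: (x \in A) => /=.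
  by rewrite normr1 powR1.
by rewrite normr0 powR0.
Qed.

Lemma indic_Lfun (A : set T) : measurable A -> (\1_A : T -> R) \in Lfun P 2%:E.
Proof.
move=> mA; rewrite inE; apply/andP; split; rewrite inE /=.
  exact: measurable_indic.
rewrite /finite_norm unlock /= poweR_lty //.
under eq_integral => x _ do rewrite indic_pow2.
rewrite integral_indic // setIT.
by rewrite (le_lt_trans (probability_le1 _ mA)) // ltry.
Qed.

Lemma indic_cov (A B : set T) : measurable A -> measurable B ->
  covariance P (\1_A) (\1_B) = (fine (P (A `&` B)) - fine (P A) * fine (P B))%:E.
Proof.
move=> mA mB.
have LA := indic_Lfun mA; have LB := indic_Lfun mB.
rewrite covarianceE ?L2mul ?L21 //.
have -> : (\1_A * \1_B = \1_(A `&` B) :> (T -> R)) by rewrite indicI.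
rewrite !expectation_indic //; last exact: measurableI.
rewrite EFinB EFinM !fineK //; try apply: fin_num_measure; by [|apply: measurableI].
Qed.

Lemma indic_var (A : set T) : measurable A ->
  'V_P[\1_A] = (fine (P A) * (1 - fine (P A)))%:E.
Proof.
move=> mA; rewrite /variance indic_cov // setIid.
by congr (_ %:E); rewrite mulrBr mulr1.
Qed.

Lemma cov_affine (al be ga de : R) (A B : set T) : measurable A -> measurable B ->
  covariance P (fun w => al + \1_A w * be) (fun w => ga + \1_B w * de) =
  ((be * de)%:E * covariance P (\1_A) (\1_B))%E.
Proof.
move=> mA mB.
have LA := indic_Lfun mA; have LB := indic_Lfun mB.
have -> : (fun w => al + \1_A w * be) = (cst al \+ be \o* \1_A)%R by [].
have -> : (fun w => ga + \1_B w * de) = (cst ga \+ de \o* \1_B)%R by [].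
have LbA : (be \o* \1_A)%R \in Lfun P 2%:E by apply: Lfun_scale; rewrite ?ler1n.
have LdB : (de \o* \1_B)%R \in Lfun P 2%:E by apply: Lfun_scale; rewrite ?ler1n.
have Lc : forall c : R, (cst c : T -> R) \in Lfun P 2%:E by move=> c; apply: Lfun_cst.
have H := rpredD (Lc ga) LdB.
rewrite covarianceDl //; last exact (H (lee1n 2)).
rewrite covariance_cst_l add0e.
rewrite covarianceDr //.
rewrite covariance_cst_r add0e.
rewrite (covarianceZl _ (L21 LA) (L21 LdB) (L2mul LA LdB)).
rewrite (covarianceZr _ (L21 LA) (L21 LB) (L2mul LA LB)).
by rewrite EFinM muleA.
Qed.


Lemma rep_ae (X : T -> R) (a b : R) (h : R -> R) : a != b ->
  {ae P, forall w, X w = a \/ X w = b} ->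
  {ae P, forall w, h (X w) = h a + \1_(X @^-1` [set b]) w * (h b - h a)}.
Proof.
move=> ab; apply: filterS => w [] Xw; rewrite indicE.
- have nw : (w \in X @^-1` [set b]) = false.
    by apply: memNset; rewrite /preimage /= Xw; apply/eqP.
  by rewrite nw mul0r addr0 Xw.
- have yw : (w \in X @^-1` [set b]) = true by apply: mem_set; rewrite /preimage /= Xw.
  by rewrite yw mul1r Xw addrC subrK.
Qed.

Lemma measurable_rep (al be : R) (A : set T) : measurable A ->
  measurable_fun setT (fun w => al + \1_A w * be).
Proof.
move=> mA; apply: measurable_funD; first exact: measurable_cst.
by apply: measurable_funM; [exact: measurable_indic|exact: measurable_cst].
Qed.

Lemma corr_formula (U V : T -> R) (al be ga de : R) (A B : set T) :
  measurable A -> measurable B ->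
  measurable_fun setT U -> measurable_fun setT V ->
  {ae P, forall w, U w = al + \1_A w * be} ->
  {ae P, forall w, V w = ga + \1_B w * de} ->
  corr P U V = Num.sg be * Num.sg de * corr P (\1_A) (\1_B).
Proof.
move=> mA mB mU mV hU hV.
have mU' := measurable_rep al be mA; have mV' := measurable_rep ga de mB.
rewrite /corr /variance.
rewrite (covariance_ae mU mU' mV mV' hU hV) (covariance_ae mU mU' mU mU' hU hU).
rewrite (covariance_ae mV mV' mV mV' hV hV) !cov_affine //.
rewrite !indic_cov // -!EFinM /=.
set c := (_ - fine (P A) * fine (P B)).
set vA := (_ - fine (P A) * fine (P A)).
set vB := (_ - fine (P B) * fine (P B)).
rewrite -sgrM.
have -> : be * be * vA * (de * de * vB) = (be * de) ^+ 2 * (vA * vB) by ring.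
rewrite sqrtrM ?sqr_ge0 // sqrtr_sqr.
set x := be * de; set s := Num.sqrt (vA * vB).
case: (eqVneq x 0) => [->|x0]; first by rewrite sgr0 !mul0r.
case: (eqVneq s 0) => [->|s0]; first by rewrite !mulr0 !invr0 !mulr0.
rewrite -{1}(mulr_sg_norm x).
have nx : `|x| != 0 by rewrite normr_eq0.
field.
by rewrite nx s0.
Qed.


Lemma corr_bound (U V : T -> R) : U \in Lfun P 2%:E -> V \in Lfun P 2%:E ->
  -1 <= corr P U V <= 1.
Proof.
move=> LU LV.
have LU1 := L21 LU; have LV1 := L21 LV; have LUV := L2mul LU LV.
have fc := covariance_fin_num LU1 LV1 LUV.
have fU := variance_fin_num LU; have fV := variance_fin_num LV.
have h1 := covariance_le LU LV.
have LNU : (\- U)%R \in Lfun P 2%:E.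
  have : (- U)%R \in Lfun P 2%:E by rewrite rpredN.
  by [].
have h2 := covariance_le LNU LV.
rewrite covarianceNl // varianceN // in h2.
have vU0 : 0 <= fine ('V_P[U])%E by apply: fine_ge0; apply: variance_ge0.
have vV0 : 0 <= fine ('V_P[V])%E by apply: fine_ge0; apply: variance_ge0.
move: h1 h2; rewrite -(fineK fc) -(fineK fU) -(fineK fV) /= -!EFinM !lee_fin.
rewrite /corr /variance.
set c := fine (covariance P U V).
rewrite -/(variance P U) -/(variance P V).
set vU := fine _; set vV := fine ('V_P[V])%E.
move=> h1 h2.
rewrite sqrtrM //.
set s := Num.sqrt vU * Num.sqrt vV.
have s0 : 0 <= s by rewrite mulr_ge0 // sqrtr_ge0.
case: (eqVneq s 0) => [->|sn0]; first by rewrite invr0 mulr0 lerN10 ler01.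
have sp : 0 < s by rewrite lt_def sn0 s0.
rewrite ler_pdivlMr // ler_pdivrMr //.
rewrite mulN1r mul1r; apply/andP; split; [rewrite lerNl; exact h2 | exact h1].
Qed.


Lemma mpre (X : T -> R) (B : set R) : measurable_fun setT X -> measurable B ->
  measurable (X @^-1` B).
Proof. by move=> mX mB; rewrite -[X @^-1` B]setTI; exact: mX. Qed.

Lemma support_ae (X : T -> R) (a b : R) : measurable_fun setT X ->
  rv_support P X = [set a; b] -> {ae P, forall w, X w = a \/ X w = b}.
Proof.
move=> mX supp.
pose I (q : rat * rat) := X @^-1` `]ratr q.1, ratr q.2]%classic.
have mI q : measurable (I q) by apply: mpre => //; exact: measurable_itv.
pose F (n : nat) := match unpickle n with
  | Some q => if P (I q) == 0%E then I q else set0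
  | None => set0 end.
have negF n : P.-negligible (F n).
  rewrite /F; case: (unpickle n) => [q|]; last exact: negligible_set0.
  case: ifPn => [/eqP h|_]; last exact: negligible_set0.
  by apply/negligibleP.
apply: (negligibleS _ (negligible_bigcup negF)) => w /= nw.
have xns : ~ rv_support P X (X w) by rewrite supp => -[|] h; apply: nw; [left|right].
have [e e0 He] : exists2 e : R, 0 < e & P [set w' | X w - e < X w' <= X w + e] = 0%E.
  apply: contra_notP xns => H e e0.
  rewrite lt_def measure_ge0 andbT; apply/negP => /eqP h.
  by apply: H; exists e.
have hxe : X w - e < X w by rewrite ltrBlDr ltrDl.
have [p] := rat_in_itvoo hxe.
rewrite in_itv /= => /andP[p1 p2].
have hxe' : X w < X w + e by rewrite ltrDl.
have [q] := rat_in_itvoo hxe'.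
rewrite in_itv /= => /andP[q1 q2].
exists (pickle (p, q)); first by [].
rewrite /F pickleK.
have Iw : I (p, q) w by rewrite /I /= in_itv /= p2 (ltW q1).
have -> : P (I (p, q)) = 0%E.
  apply/eqP; rewrite -measure_le0 -He; apply: le_measure; rewrite ?inE //.
  - rewrite -[X in measurable X]/(X @^-1` `](X w - e), (X w + e)]%classic).
    by apply: mpre => //; exact: measurable_itv.
  - move=> w'; rewrite /I /= in_itv /= => /andP[h1 h2].
    by rewrite (lt_trans p1 h1) (le_trans h2 (ltW q2)).
by rewrite eqxx.
Qed.

Lemma support_pos (X : T -> R) (a b : R) : measurable_fun setT X -> a != b ->
  rv_support P X = [set a; b] -> {ae P, forall w, X w = a \/ X w = b} ->
  (0 < P (X @^-1` [set a]))%E.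
Proof.
move=> mX ab supp hae.
have sa : rv_support P X a by rewrite supp; left.
have n0 : 0 < `|b - a| by rewrite normr_gt0 subr_eq0 eq_sym.
have e0 : 0 < `|b - a| / 2 by rewrite divr_gt0.
apply: (lt_le_trans (sa _ e0)); apply: ae_le_measure.
- rewrite -[X in measurable X]/(X @^-1` `](a - `|b - a| / 2), (a + `|b - a| / 2)]%classic).
  by apply: mpre => //; exact: measurable_itv.
- exact: mpre.
- apply: filterS hae => w [Xa|Xb] /= /andP[h1 h2]; first by [].
  exfalso.
  rewrite Xb in h1 h2.
  have : `|b - a| <= `|b - a| / 2 by rewrite ler_norml; apply/andP; split; lra.
  lra.
Qed.

Lemma inL2_rep (U : T -> R) (al be : R) (A : set T) : measurable A ->
  measurable_fun setT U -> {ae P, forall w, U w = al + \1_A w * be} ->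
  be != 0 -> (0 < P A)%E -> (0 < P (~` A))%E -> inL2 P U.
Proof.
move=> mA mU hU be0 pA pA'.
have LA := indic_Lfun mA.
have Lrep : (fun w => al + \1_A w * be) \in Lfun P 2%:E.
  have -> : (fun w => al + \1_A w * be) = (cst al \+ be \o* \1_A)%R by [].
  have LbA : (be \o* \1_A)%R \in Lfun P 2%:E by apply: Lfun_scale; rewrite ?ler1n.
  have Lc : (cst al : T -> R) \in Lfun P 2%:E by apply: Lfun_cst.
  have H := rpredD Lc LbA.
  exact (H (lee1n 2)).
split; first exact: Lfun_ae mU hU Lrep.
move=> c Pc.
have mS : measurable (U @^-1` [set c]) := mpre mU (measurable_set1 c).
have hc : {ae P, forall w, U w = c}.
  exists (~` (U @^-1` [set c])); split; first exact: measurableC.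
    by rewrite probability_setC // Pc subee.
  by move=> w /=.
have := covariance_ae mU (measurable_cst c) mU (measurable_cst c) hc hc.
rewrite covariance_cst_l.
rewrite (covariance_ae mU (measurable_rep al be mA) mU (measurable_rep al be mA) hU hU).
rewrite cov_affine // indic_cov // setIid -EFinM => /eqP; rewrite eqe.
have finA : P A \is a fin_num by apply: fin_num_measure.
have p0 : 0 < fine (P A) by apply: fine_gt0; rewrite pA /= ltey_eq finA.
move: pA'; rewrite probability_setC // -(fineK finA) -EFinB lte_fin => p1.
have bb : 0 < be * be by rewrite lt0r mulf_neq0 //= -expr2 sqr_ge0.
rewrite /= => /eqP h.
have q : 0 < fine (P A) - fine (P A) * fine (P A) by nra.
by have := mulr_gt0 bb q; rewrite h ltxx.
Qed.

Lemma notinL2_cst (U : T -> R) (c : R) : measurable_fun setT U ->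
  {ae P, forall w, U w = c} -> ~ inL2 P U.
Proof.
move=> mU h [_ H]; apply: (H c); apply: ae_prob1 => //.
exact: mpre mU (measurable_set1 c).
Qed.

Lemma bi_facts (X : T -> R) (a b : R) : measurable_fun setT X -> a != b ->
  rv_support P X = [set a; b] ->
  [/\ {ae P, forall w, X w = a \/ X w = b}, (0 < P (X @^-1` [set b]))%E,
     (0 < P (~` (X @^-1` [set b])))%E &
     forall g : R -> R, measurable_fun setT g -> (inL2 P (g \o X) <-> g a != g b)].
Proof.
move=> mX ab sX.
have hX := support_ae mX sX.
have pa := support_pos mX ab sX hX.
have pb : (0 < P (X @^-1` [set b]))%E.
  apply: (support_pos (a:=b) (b:=a) mX); first by rewrite eq_sym.
    by rewrite sX setUC.
  by apply: filterS hX => w []; [right|left].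
have pnb : (0 < P (~` (X @^-1` [set b])))%E.
  apply: (lt_le_trans pa); apply: le_measure; rewrite ?inE.
  - exact: mpre.
  - by apply: measurableC; exact: mpre.
  - by move=> w /= ->; apply/eqP.
split => // g mg; split.
- move=> L; apply/negP => /eqP gab.
  apply: (notinL2_cst (c := g a) (measurableT_comp mg mX) _ L).
  by apply: filterS (rep_ae g ab hX) => w /= ->; rewrite gab subrr mulr0 addr0.
- move=> gab; apply: (inL2_rep (A := X @^-1` [set b]) (al := g a) (be := g b - g a)).
  + exact: mpre.
  + exact: measurableT_comp.
  + exact: rep_ae.
  + by rewrite subr_eq0 eq_sym.
  + exact: pb.
  + exact: pnb.
Qed.

Lemma corr_g (X Y : T -> R) (a b c e : R) (g : R -> R) :
  measurable_fun setT X -> measurable_fun setT Y -> measurable_fun setT g ->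
  a != b -> c != e ->
  {ae P, forall w, X w = a \/ X w = b} -> {ae P, forall w, Y w = c \/ Y w = e} ->
  corr P (g \o X) (g \o Y) = Num.sg (g b - g a) * Num.sg (g e - g c) *
    corr P (\1_(X @^-1` [set b])) (\1_(Y @^-1` [set e])).
Proof.
move=> mX mY mg ab ce hX hY.
apply: corr_formula.
- exact: mpre.
- exact: mpre.
- exact: measurableT_comp.
- exact: measurableT_comp.
- exact: rep_ae.
- exact: rep_ae.
Qed.

Lemma prob_bounds (A : set T) : measurable A -> (0 < P A)%E -> (0 < P (~` A))%E ->
  0 < fine (P A) /\ 0 < 1 - fine (P A).
Proof.
move=> mA pA pA'.
have finA : P A \is a fin_num by apply: fin_num_measure.
split; first by apply: fine_gt0; rewrite pA /= ltey_eq finA.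
by move: pA'; rewrite probability_setC // -(fineK finA) -EFinB lte_fin.
Qed.

Lemma k_zero_cov (A B : set T) : measurable A -> measurable B ->
  (0 < P A)%E -> (0 < P (~` A))%E -> (0 < P B)%E -> (0 < P (~` B))%E ->
  corr P (\1_A) (\1_B) = 0 -> covariance P (\1_A) (\1_B) = 0%E.
Proof.
move=> mA mB pA pA' pB pB'.
have [a0 a1] := prob_bounds mA pA pA'.
have [b0 b1] := prob_bounds mB pB pB'.
rewrite /corr !indic_var // indic_cov // /=.
move=> /eqP; rewrite mulf_eq0 invr_eq0 sqrtr_eq0 => /orP[/eqP -> //|h].
exfalso.
have : 0 < fine (P A) * (1 - fine (P A)) * (fine (P B) * (1 - fine (P B))).
  by rewrite !mulr_gt0.
by rewrite ltNge h.
Qed.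

Lemma indep_of_cov0 (X Y : T -> R) (a b c e : R) :
  measurable_fun setT X -> measurable_fun setT Y -> a != b -> c != e ->
  {ae P, forall w, X w = a \/ X w = b} -> {ae P, forall w, Y w = c \/ Y w = e} ->
  covariance P (\1_(X @^-1` [set b])) (\1_(Y @^-1` [set e])) = 0%E ->
  rv_independent P X Y.
Proof.
move=> mX mY ab ce hX hY h0 A' B' mA' mB'.
have mS : measurable (X @^-1` A') := mpre mX mA'.
have mS' : measurable (Y @^-1` B') := mpre mY mB'.
have mb : measurable (X @^-1` [set b]) := mpre mX (measurable_set1 b).
have me : measurable (Y @^-1` [set e]) := mpre mY (measurable_set1 e).
have hS : {ae P, forall w, \1_(X @^-1` A') w =
    \1_A' a + \1_(X @^-1` [set b]) w * (\1_A' b - \1_A' a) :> R}.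
  by apply: filterS (rep_ae (\1_A') ab hX) => w <-; rewrite !indicE.
have hS' : {ae P, forall w, \1_(Y @^-1` B') w =
    \1_B' c + \1_(Y @^-1` [set e]) w * (\1_B' e - \1_B' c) :> R}.
  by apply: filterS (rep_ae (\1_B') ce hY) => w <-; rewrite !indicE.
have := covariance_ae (measurable_indic mS) (measurable_rep _ _ mb)
  (measurable_indic mS') (measurable_rep _ _ me) hS hS'.
rewrite cov_affine // h0 mule0 indic_cov // => /eqP; rewrite eqe subr_eq0 => /eqP h.
have fI : P (X @^-1` A' `&` Y @^-1` B') \is a fin_num.
  by apply: fin_num_measure; apply: measurableI.
by rewrite -(fineK fI) h EFinM !fineK //; apply: fin_num_measure.
Qed.

End S.

Lemma flip_g (R : realType) (a b c e : R) : a != b -> c != e -> [set a; b] <> [set c; e] ->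
  exists g : R -> R, [/\ measurable_fun setT g, g a != g b, g c != g e &
   Num.sg (g b - g a) * Num.sg (g e - g c) = - (Num.sg (b - a) * Num.sg (e - c))].
Proof.
move=> ab ce neq.
have key : forall u v : R, u != v -> u != c -> u != e ->
   exists g : R -> R, [/\ measurable_fun setT g, g u = 2 * v - u, g v = v, g c = c & g e = e].
  move=> u v uv uc ue.
  exists (fun x => x + \1_[set u] x * (2 * (v - u))); split.
  - apply: measurable_funD => //; apply: measurable_funM.
      exact: measurable_indic (measurable_set1 u).
    exact: measurable_cst.
  - by rewrite indicE mem_set //= mul1r; ring.
  - by rewrite indicE memNset ?mul0r ?addr0 //=; apply/eqP; rewrite eq_sym.
  - by rewrite indicE memNset ?mul0r ?addr0 //=; apply/eqP; rewrite eq_sym.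
  - by rewrite indicE memNset ?mul0r ?addr0 //=; apply/eqP; rewrite eq_sym.
have H : (a != c /\ a != e) \/ (b != c /\ b != e).
  case: (eqVneq a c) => [ac|ac]; last case: (eqVneq a e) => [ae|ae]; last by left.
  - rewrite ac in ab neq.
    case: (eqVneq b e) => [be|be]; first by exfalso; apply: neq; rewrite be.
    case: (eqVneq b c) => [bc|bc]; first by rewrite bc eqxx in ab.
    by right.
  - rewrite ae in ab neq.
    case: (eqVneq b c) => [bc|bc]; first by exfalso; apply: neq; rewrite bc setUC.
    case: (eqVneq b e) => [be|be]; first by rewrite be eqxx in ab.
    by right.
case: H => [[ac ae]|[bc be]].
- have [g [mg ga gb gc ge]] := key a b ab ac ae.
  exists g; split => //; rewrite ?ga ?gb ?gc ?ge //.
  + by apply: contra_neq ab => h; lra.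
  + by rewrite (_ : b - (2 * b - a) = - (b - a)); [rewrite sgrN mulNr | ring].
- have ba : b != a by rewrite eq_sym.
  have [g [mg gb ga gc ge]] := key b a ba bc be.
  exists g; split => //; rewrite ?ga ?gb ?gc ?ge //.
  + by apply: contra_neq ab => h; lra.
  + by rewrite (_ : 2 * a - b - a = - (b - a)); [rewrite sgrN mulNr | ring].
Qed.

Unset Implicit Arguments.

Theorem proposition5 (d : measure_display) (T : measurableType d) (R : realType)
  (P : probability T R) (X Y : {RV P >-> R}) :
  biatomic P X -> biatomic P Y ->
  (IC P X Y <-> (rv_support P X = rv_support P Y \/ rv_independent P X Y)).
Proof.
move=> [a [b [ab sX]]] [c [e [ce sY]]].
have mX : measurable_fun setT X := measurable_funPT X.
have mY : measurable_fun setT Y := measurable_funPT Y.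
have mid : measurable_fun setT (@id R) by exact: measurable_id.
have [hX pXb pXnb LXg] := bi_facts mX ab sX.
have LX : inL2 P X := (LXg id mid).2 ab.
have mA : measurable (X @^-1` [set b]) := mpre mX (measurable_set1 b).
split.
- move=> [r [_ [_ [_ [rXY Hg]]]]].
  case: (pselect ([set a; b] = [set c; e])) => [eqs|neqs]; first by left; rewrite sX sY.
  right.
  have [hY pYe pYne LYg] := bi_facts mY ce sY.
  have mB : measurable (Y @^-1` [set e]) := mpre mY (measurable_set1 e).
  have [g [mg gab gce gs]] := flip_g ab ce neqs.
  have e1 : corr P X Y = Num.sg (b - a) * Num.sg (e - c) *
      corr P (\1_(X @^-1` [set b])) (\1_(Y @^-1` [set e])).
    exact: (corr_g mX mY mid ab ce hX hY).
  have := Hg g mg ((LXg g mg).2 gab) ((LYg g mg).2 gce).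
  rewrite (corr_g mX mY mg ab ce hX hY) gs -rXY e1.
  set k := corr P _ _; set s := Num.sg (b - a) * Num.sg (e - c) => h.
  have s0 : s != 0 by rewrite mulf_neq0 // sgr_eq0 subr_eq0 eq_sym.
  have k0 : k = 0.
    have : s * k = 0 by lra.
    by move/eqP; rewrite mulf_eq0 (negbTE s0) => /eqP.
  apply: (indep_of_cov0 mX mY ab ce hX hY).
  by apply: k_zero_cov.
- move=> [eqs|ind].
  + have sY' : rv_support P Y = [set a; b] by rewrite -eqs.
    have [hY pYb pYnb LYg] := bi_facts mY ab sY'.
    have LY : inL2 P Y := (LYg id mid).2 ab.
    have e1 : corr P X Y = Num.sg (b - a) * Num.sg (b - a) *
      corr P (\1_(X @^-1` [set b])) (\1_(Y @^-1` [set b])).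
      exact: (corr_g mX mY mid ab ab hX hY).
    have sq : forall x : R, x != 0 -> Num.sg x * Num.sg x = 1.
      by move=> x x0; rewrite -expr2 sqr_sg x0.
    exists (corr P X Y); split; first exact: corr_bound LX.1 LY.1.
    split => //; split => //; split => // g mg Lg Lg'.
    have gab := (LXg g mg).1 Lg.
    rewrite (corr_g mX mY mg ab ab hX hY) e1 !sq //.
      by rewrite subr_eq0 eq_sym.
    by rewrite subr_eq0 eq_sym.
  + have [hY pYe pYne LYg] := bi_facts mY ce sY.
    have LY : inL2 P Y := (LYg id mid).2 ce.
    have mB : measurable (Y @^-1` [set e]) := mpre mY (measurable_set1 e).
    have c0 : covariance P (\1_(X @^-1` [set b])) (\1_(Y @^-1` [set e])) = 0%E.
      rewrite indic_cov // (ind _ _ (measurable_set1 b) (measurable_set1 e)).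
      by rewrite fineM ?subrr //; apply: fin_num_measure.
    have k0 : corr P (\1_(X @^-1` [set b])) (\1_(Y @^-1` [set e])) = 0.
      by rewrite /corr c0 /= mul0r.
    exists 0; split; first by rewrite lerN10 ler01.
    split => //; split => //; split.
      by rewrite (corr_g mX mY mid ab ce hX hY) k0 mulr0.
    by move=> g mg _ _; rewrite (corr_g mX mY mg ab ce hX hY) k0 mulr0.
Qed.
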